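(* Let $n,m\ge1$, $t\ge1$, $\mathbf y\in\{0,1\}^n$ fixed training labels with $l^\star=\sum_iy_i$, $\Psi\in\mathbb R^{m\times n}$, thresholds $\tau_1,\dots,\tau_t\in\mathbb R$, and metrics $\mathrm{metric}^{(0)},\dots,\mathrm{metric}^{(t)}$, each of the form $$\mathrm{metric}^{(i)}(\hat{\mathbf y},\check{\mathbf y})=\sum_{j}\frac{a^{(i)}_j\mathrm{TP}+b^{(i)}_j\mathrm{TN}+f^{(i)}_j(\mathrm{PP},\mathrm{AP})}{g^{(i)}_j(\mathrm{PP},\mathrm{AP})}.$$ Then $$\max_{\theta\in\mathbb R^m}\ \min_{\mathcal Q}\ \max_{\mathcal P:\ \mathbb E_{\hat{\mathbf Y}\sim\mathcal P}[\mathrm{metric}^{(i)}(\hat{\mathbf Y},\mathbf y)]\ge\tau_i\ \forall i\in[1,t]}\ \mathbb E_{\hat{\mathbf Y}\sim\mathcal P,\check{\mathbf Y}\sim\mathcal Q}\Big[\mathrm{metric}^{(0)}(\hat{\mathbf Y},\check{\mathbf Y})-\theta^\top(\Psi\check{\mathbf Y}-\Psi\mathbf y)\Big]$$ ($\mathcal P,\mathcal Q$ probability distributions on $\{0,1\}^n$, $\hat{\mathbf Y},\check{\mathbf Y}$ independent) equals $$\max_{\theta}\Big\{\min_{\mathbf Q\in\Delta}\max_{\mathbf P\in\Delta\cap\Gamma}\Big[\sum_{k,l=0}^n\sum_j\frac{1}{g^{(0)}_j(k,l)}\Big\{a^{(0)}_j[\mathbf p_k^1\cdot\mathbf q_l^1]+b^{(0)}_j[\mathbf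 p_k^0\cdot\mathbf q_l^0]+f^{(0)}_j(k,l)r_ks_l\Big\}-\langle\mathbf Q^\top\mathbf 1,\Psi^\top\theta\rangle\Big]+\langle\mathbf y,\Psi^\top\theta\rangle\Big\},$$ where $$\Gamma=\Big\{\mathbf P:\ \sum_{k=0}^n\sum_j\frac{1}{g^{(i)}_j(k,l^\star)}\Big\{a^{(i)}_j[\mathbf p_k^1\cdot\mathbf y]+b^{(i)}_j[\mathbf p_k^0\cdot(\mathbf 1-\mathbf y)]+f^{(i)}_j(k,l^\star)r_k\Big\}\ge\tau_i\ \ \forall i\in[1,t]\Big\}.$$
   Context: For $\hat{\mathbf y},\check{\mathbf y}\in\{0,1\}^n$: $\mathrm{TP}=\sum\hat y_i\check y_i$, $\mathrm{TN}=\sum(1-\hat y_i)(1-\check y_i)$, $\mathrm{PP}=\sum\hat y_i$, $\mathrm{AP}=\sum\check y_i$; $a_j^{(i)},b_j^{(i)}\in\mathbb R$, $f_j^{(i)},g_j^{(i)}:\{0,\dots,n\}^2\to\mathbb R$ with $g_j^{(i)}$ never zero. The $i$-th column of $\Psi$ is the feature $\phi(x_i,1)\in\mathbb R^m$ of sample $i$ (with $\phi(x_i,0)=0$), so the feature of a label vector $\mathbf y$ is $\Psi\mathbf y$. $\Delta=\{\mathbf P\in\mathbb R^{n\times n}: p_{i,k}\ge0;\ p_{i,k}\le\frac1k\sum_jp_{j,k}\ \forall i,k\in[1,n];\ \sum_k\frac1k\sum_ip_{i,k}\le1\}$. From $\mathbf P$: $\mathbf p_k^1=\mathbf P_{(:,k)}$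 ($k\ge1$), $\mathbf p_0^1=\mathbf 0$; $r_k=\frac1k\mathbf 1^\top\mathbf p_k^1$ ($k\ge1$), $r_0=1-\sum_{k\ge1}r_k$; $\mathbf p_k^0=r_k\mathbf 1-\mathbf p_k^1$; likewise $\mathbf q_l^1,\mathbf q_l^0,s_l$ from $\mathbf Q$. *)

(* Defs.v *)
From HB Require Import structures.
From mathcomp Require Import all_boot all_order all_algebra.
From mathcomp Require Import classical_sets reals constructive_ereal ereal.
Set Implicit Arguments. Unset Strict Implicit. Unset Printing Implicit Defensive.
Import Order.TTheory GRing.Theory Num.Theory.
Local Open Scope ring_scope.

Definition lab (n : nat) := {ffun 'I_n -> bool}.

Section Defs.
Variable R : realType.
Variable n : nat.

Definition TP (yh yc : lab n) : nat := \sum_(i < n) ((yh i && yc i) : nat).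
Definition TN (yh yc : lab n) : nat := \sum_(i < n) ((~~ yh i && ~~ yc i) : nat).
Definition PP (yh : lab n) : nat := \sum_(i < n) (yh i : nat).
Definition AP (yc : lab n) : nat := \sum_(i < n) (yc i : nat).

Record fmetric := FMetric {
  mJ : nat;
  ma : 'I_mJ -> R;
  mb : 'I_mJ -> R;
  mf : 'I_mJ -> nat -> nat -> R;
  mg : 'I_mJ -> nat -> nat -> R }.
Arguments ma : clear implicits. Arguments mb : clear implicits.
Arguments mf : clear implicits. Arguments mg : clear implicits.

Definition metric_val (M : fmetric) (yh yc : lab n) : R :=
  \sum_(j < mJ M)
     (ma M j * (TP yh yc)%:R + mb M j * (TN yh yc)%:R + mf M j (PP yh) (AP yc))
       / mg M j (PP yh) (AP yc).

Definition g_nonzero (M : fmetric) : Prop :=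
  forall j k l, (k <= n)%N -> (l <= n)%N -> mg M j k l != 0.

Definition is_dist (D : lab n -> R) : Prop :=
  (forall y, 0 <= D y) /\ \sum_(y : lab n) D y = 1.

Definition yvec (y : lab n) : 'cV[R]_n := \col_i (y i)%:R.

Definition game_obj (m : nat) (Psi : 'M[R]_(m, n)) (theta : 'cV[R]_m)
    (y : lab n) (M0 : fmetric) (P Q : lab n -> R) : R :=
  \sum_(yh : lab n) \sum_(yc : lab n) P yh * Q yc *
    (metric_val M0 yh yc - (theta^T *m (Psi *m (yvec yc - yvec y))) 0 0).

Definition exp_metric (M : fmetric) (P : lab n -> R) (y : lab n) : R :=
  \sum_(yh : lab n) P yh * metric_val M yh y.

(* the polytope Delta; column c : 'I_n of P stands for k = c+1 *)
Definition inDelta (P : 'M[R]_n) : Prop :=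
  (forall i k, 0 <= P i k) /\
  (forall i k : 'I_n, P i k <= (k.+1%:R)^-1 * \sum_(j < n) P j k) /\
  \sum_(k < n) (k.+1%:R)^-1 * \sum_(i < n) P i k <= 1.

(* p_k^1 = P_(:,k) for 1 <= k <= n, p_0^1 = 0 *)
Definition pcol1 (P : 'M[R]_n) (k : nat) (i : 'I_n) : R :=
  if k is k'.+1 then oapp (fun c : 'I_n => P i c) 0 (insub k') else 0.

Definition rk (P : 'M[R]_n) (k : nat) : R :=
  if k is k'.+1 then (k%:R)^-1 * \sum_(i < n) pcol1 P k i
  else 1 - \sum_(c < n) (c.+1%:R)^-1 * \sum_(i < n) P i c.

Definition pcol0 (P : 'M[R]_n) (k : nat) (i : 'I_n) : R := rk P k - pcol1 P k i.

Definition dotv (u v : 'I_n -> R) : R := \sum_(i < n) u i * v i.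

Definition yreal (y : lab n) (i : 'I_n) : R := (y i)%:R.

Definition lstar (y : lab n) : nat := \sum_(i < n) (y i : nat).

Definition marg_obj (m : nat) (Psi : 'M[R]_(m, n)) (theta : 'cV[R]_m)
    (M0 : fmetric) (P Q : 'M[R]_n) : R :=
  \sum_(k < n.+1) \sum_(l < n.+1) \sum_(j < mJ M0)
     (mg M0 j k l)^-1 *
       (ma M0 j * dotv (pcol1 P k) (pcol1 Q l)
        + mb M0 j * dotv (pcol0 P k) (pcol0 Q l)
        + mf M0 j k l * rk P k * rk Q l)
  - dotv (fun i => \sum_(c < n) Q i c) (fun i => (Psi^T *m theta) i 0).

Definition lin_y (m : nat) (Psi : 'M[R]_(m, n)) (theta : 'cV[R]_m) (y : lab n) : R :=
  dotv (yreal y) (fun i => (Psi^T *m theta) i 0).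

Definition inGamma (t : nat) (Mc : 'I_t -> fmetric) (tau : 'I_t -> R)
    (y : lab n) (P : 'M[R]_n) : Prop :=
  forall i : 'I_t,
    tau i <= \sum_(k < n.+1) \sum_(j < mJ (Mc i))
      (mg (Mc i) j k (lstar y))^-1 *
        (ma (Mc i) j * dotv (pcol1 P k) (yreal y)
         + mb (Mc i) j * dotv (pcol0 P k) (fun i => 1 - yreal y i)
         + mf (Mc i) j k (lstar y) * rk P k).

End Defs.

(* Main.v *)
Require Import Defs.
From HB Require Import structures.
From mathcomp Require Import all_boot all_order all_algebra.
From mathcomp Require Import classical_sets reals constructive_ereal ereal.
From mathcomp Require Import ring lra.
From mathcomp Require boolp.
Import Order.TTheory GRing.Theory Num.Theory.
Local Open Scope ring_scope.

Lemma sup_shift (R : realType) (S : set \bar R) (c : R) :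
  ereal_sup [set (x + c%:E)%E | x in S] = (ereal_sup S + c%:E)%E.
Proof.
apply/eqP; rewrite eq_le; apply/andP; split.
  apply/ereal_supP => _ [x Sx <-]; rewrite leeD2rE //; exact: ereal_sup_ubound.
rewrite -leeBrDr //; apply/ereal_supP => x Sx; rewrite leeBrDr //.
by apply: ereal_sup_ubound; exists x.
Qed.

Lemma inf_shift (R : realType) (S : set \bar R) (c : R) :
  ereal_inf [set (x + c%:E)%E | x in S] = (ereal_inf S + c%:E)%E.
Proof.
apply/eqP; rewrite eq_le; apply/andP; split; last first.
  apply: le_ereal_inf_tmp => _ [x Sx <-]; rewrite leeD2rE //; exact: ereal_inf_lbound.
rewrite -leeBlDr //; apply: le_ereal_inf_tmp => x Sx; rewrite leeBlDr //.
by apply: ereal_inf_lbound; exists x.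
Qed.

Section Fin.
Context {R : realType} {n : nat}.
Implicit Types (D : lab n -> R) (yy yh yc : lab n).

Definition rr D (k : nat) : R := \sum_(y : lab n | PP y == k) D y.
Definition pp D (k : nat) (i : 'I_n) : R :=
  \sum_(y : lab n | PP y == k) D y * yreal R y i.
Definition phi D : 'M[R]_n := \matrix_(i, c) pp D c.+1 i.

Lemma yi_le_PP yy i : ((yy i : nat) <= PP yy)%N.
Proof. by rewrite /PP (bigD1 i) //= leq_addr. Qed.

Lemma PP_le yy : (PP yy <= n)%N.
Proof.
rewrite /PP -[X in (_ <= X)%N]card_ord -sum1_card.
by apply: leq_sum => i _; case: (yy i).
Qed.

Lemma PPE yy : (PP yy)%:R = \sum_i yreal R yy i :> R.
Proof. by rewrite /PP natr_sum. Qed.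

Lemma sum_partPP (F : lab n -> R) :
  \sum_(y : lab n) F y = \sum_(k < n.+1) \sum_(y : lab n | PP y == k) F y.
Proof.
rewrite (partition_big (fun y => (inord (PP y) : 'I_n.+1)) xpredT) //.
apply: eq_bigr => k _; apply: eq_bigl => y /=.
by rewrite -val_eqE /= inordK // ltnS PP_le.
Qed.

Lemma pp0 D i : pp D 0 i = 0.
Proof.
rewrite /pp big1 // => y /eqP P0.
have := yi_le_PP y i; rewrite P0 /yreal; case: (y i) => //= _.
by rewrite mulr0.
Qed.

Lemma sum_pp D k : \sum_i pp D k i = k%:R * rr D k.
Proof.
rewrite /pp exchange_big /rr mulr_sumr; apply: eq_bigr => y /eqP <-.
by rewrite -mulr_sumr PPE mulrC.
Qed.

Lemma phiE D i (c : 'I_n) : phi D i c = pp D c.+1 i.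
Proof. by rewrite mxE. Qed.

Lemma pcol1_phi D k i : (k <= n)%N -> pcol1 (phi D) k i = pp D k i.
Proof.
case: k => [|k] kn /=; first by rewrite pp0.
case: insubP => [c _ cE|/negP[] //].
by rewrite /= phiE cE.
Qed.

Lemma sum_rr D : \sum_y D y = rr D 0 + \sum_(c < n) rr D c.+1.
Proof. by rewrite sum_partPP big_ord_recl. Qed.

Lemma rk_phi D k : is_dist D -> (k <= n)%N -> rk (phi D) k = rr D k.
Proof.
move=> [D0 D1]; case: k => [|k] kn; rewrite /rk.
  have -> : \sum_(c < n) (c.+1%:R)^-1 * \sum_i phi D i c = \sum_(c < n) rr D c.+1.
    apply: eq_bigr => c _; under eq_bigr do rewrite phiE.
    by rewrite sum_pp mulKf // pnatr_eq0.
  by rewrite -D1 sum_rr addrK.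
set S := (X in _ * X); have -> : S = \sum_i pp D k.+1 i.
  by apply: eq_bigr => i _; rewrite pcol1_phi.
by rewrite sum_pp mulKf // pnatr_eq0.
Qed.

Lemma pcol0_phi D k i : is_dist D -> (k <= n)%N ->
  pcol0 (phi D) k i = \sum_(y : lab n | PP y == k) D y * (1 - yreal R y i).
Proof.
move=> Dd kn; rewrite /pcol0 rk_phi // pcol1_phi // /rr /pp -sumrB.
by apply: eq_bigr => y _; rewrite mulrBr mulr1.
Qed.

Lemma rr_ge0 D k : is_dist D -> 0 <= rr D k.
Proof. by move=> [D0 _]; apply: sumr_ge0. Qed.

Lemma pp_le_rr D k i : is_dist D -> 0 <= pp D k i <= rr D k.
Proof.
move=> [D0 _]; apply/andP; split.
  by apply: sumr_ge0 => y _; apply: mulr_ge0 => //; rewrite /yreal ler0n.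
apply: ler_sum => y _; rewrite /yreal; case: (y i) => /=; first by rewrite mulr1.
by rewrite mulr0.
Qed.

Lemma inDelta_phi D : is_dist D -> inDelta (phi D).
Proof.
move=> Dd; split; [|split].
- by move=> i c; rewrite phiE; case/andP: (pp_le_rr D c.+1 i Dd).
- move=> i c; under eq_bigr do rewrite phiE.
  rewrite sum_pp mulKf ?pnatr_eq0 // phiE.
  by case/andP: (pp_le_rr D c.+1 i Dd).
- have -> : \sum_(c < n) (c.+1%:R)^-1 * \sum_i phi D i c = \sum_(c < n) rr D c.+1.
    apply: eq_bigr => c _; under eq_bigr do rewrite phiE.
    by rewrite sum_pp mulKf // pnatr_eq0.
  case: (Dd) => _ D1; rewrite -D1 sum_rr lerDr; exact: rr_ge0 Dd.
Qed.


Lemma dotvC (u v : 'I_n -> R) : dotv u v = dotv v u.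
Proof. by apply: eq_bigr => i _; rewrite mulrC. Qed.

Lemma dotv_suml (P : pred (lab n)) (c : lab n -> R) (u : lab n -> 'I_n -> R) v :
  dotv (fun i => \sum_(y | P y) c y * u y i) v = \sum_(y | P y) c y * dotv (u y) v.
Proof.
rewrite /dotv; under eq_bigr do rewrite mulr_suml.
rewrite exchange_big; apply: eq_bigr => y _; rewrite mulr_sumr.
by apply: eq_bigr => i _; rewrite mulrA.
Qed.

Lemma TPE yh yc : (TP yh yc)%:R = dotv (yreal R yh) (yreal R yc).
Proof. by rewrite /TP natr_sum; apply: eq_bigr => i _; rewrite /yreal -mulnb natrM. Qed.

Lemma TNE yh yc : (TN yh yc)%:R =
  dotv (fun i => 1 - yreal R yh i) (fun i => 1 - yreal R yc i).
Proof.
rewrite /TN natr_sum; apply: eq_bigr => i _; rewrite /yreal.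
by case: (yh i); case: (yc i); rewrite /= ?subrr ?subr0 ?mulr0 ?mul0r ?mulr1.
Qed.

Lemma APE yy : AP yy = PP yy. Proof. by []. Qed.

Lemma ppE D k : pp D k = (fun i => \sum_(y : lab n | PP y == k) D y * yreal R y i).
Proof. by []. Qed.

Lemma rrppE D k : (fun i => rr D k - pp D k i) =
  (fun i => \sum_(y : lab n | PP y == k) D y * (1 - yreal R y i)).
Proof.
apply: boolp.funext => i; rewrite /rr /pp -sumrB.
by apply: eq_bigr => y _; rewrite mulrBr mulr1.
Qed.

Lemma core (M : fmetric R) D k yc :
  \sum_(yh : lab n | PP yh == k) D yh * metric_val M yh yc =
  \sum_(j < mJ M) (mg j k (PP yc))^-1 *
    (ma j * dotv (pp D k) (yreal R yc)
     + mb j * dotv (fun i => rr D k - pp D k i) (fun i => 1 - yreal R yc i)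
     + mf j k (PP yc) * rr D k).
Proof.
rewrite rrppE ppE !dotv_suml.
transitivity (\sum_(j < mJ M) \sum_(yh : lab n | PP yh == k)
   (mg j k (PP yc))^-1 * (ma j * (D yh * dotv (yreal R yh) (yreal R yc))
   + mb j * (D yh * dotv (fun i => 1 - yreal R yh i) (fun i => 1 - yreal R yc i))
   + mf j k (PP yc) * D yh)).
  rewrite exchange_big; apply: eq_bigr => yh /eqP Pk.
  rewrite /metric_val mulr_sumr; apply: eq_bigr => j _.
  rewrite TPE TNE Pk APE; ring.
apply: eq_bigr => j _; rewrite /rr !mulr_sumr -!big_split /= mulr_sumr.
by apply: eq_bigr => yh _; ring.
Qed.

Lemma pcol1_phiF D k : (k <= n)%N -> pcol1 (phi D) k = pp D k.
Proof. by move=> kn; apply: boolp.funext => i; rewrite pcol1_phi. Qed.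

Lemma pcol0_phiF D k : is_dist D -> (k <= n)%N ->
  pcol0 (phi D) k = (fun i => rr D k - pp D k i).
Proof.
by move=> Dd kn; apply: boolp.funext => i; rewrite /pcol0 rk_phi // pcol1_phi.
Qed.

Lemma exp_metricE (M : fmetric R) P yc : is_dist P ->
  exp_metric M P yc = \sum_(k < n.+1) \sum_(j < mJ M)
      (mg j k (lstar yc))^-1 *
        (ma j * dotv (pcol1 (phi P) k) (yreal R yc)
         + mb j * dotv (pcol0 (phi P) k) (fun i => 1 - yreal R yc i)
         + mf j k (lstar yc) * rk (phi P) k).
Proof.
move=> Pd; rewrite /exp_metric sum_partPP; apply: eq_bigr => k _.
have kn : (k <= n)%N by rewrite -ltnS.
by rewrite core pcol1_phiF // pcol0_phiF // rk_phi.
Qed.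


Lemma theta_term (m : nat) (Psi : 'M[R]_(m, n)) (theta : 'cV[R]_m) yc yy :
  (theta^T *m (Psi *m (yvec R yc - yvec R yy))) 0 0 =
  dotv (yreal R yc) (fun i => (Psi^T *m theta) i 0)
  - dotv (yreal R yy) (fun i => (Psi^T *m theta) i 0).
Proof.
rewrite mulmxA.
have -> : theta^T *m Psi = (Psi^T *m theta)^T by rewrite trmx_mul trmxK.
rewrite [LHS]mxE /dotv -sumrB; apply: eq_bigr => i _.
rewrite !mxE /yreal mulrBr; congr (_ - _); exact: mulrC.
Qed.

Lemma lin3 (Pr : pred (lab n)) (Q X Y : lab n -> R) (g a b f r : R) :
  \sum_(y | Pr y) Q y * (g * (a * X y + b * Y y + f * r)) =
  g * (a * \sum_(y | Pr y) Q y * X y + b * \sum_(y | Pr y) Q y * Y y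
       + f * r * \sum_(y | Pr y) Q y).
Proof.
rewrite !mulr_sumr -!big_split mulr_sumr; apply: eq_bigr => y _ /=; ring.
Qed.

Lemma rowsum_phi D : is_dist D ->
  (fun i => \sum_(c < n) phi D i c) = (fun i => \sum_(y : lab n) D y * yreal R y i).
Proof.
move=> Dd; apply: boolp.funext => i.
under eq_bigr do rewrite phiE.
rewrite sum_partPP big_ord_recl /=.
have -> : \sum_(y : lab n | PP y == 0%N) D y * yreal R y i = 0 by exact: (pp0 D i).
by rewrite add0r.
Qed.

Lemma gameE (m : nat) (Psi : 'M[R]_(m, n)) (theta : 'cV[R]_m) yy (M0 : fmetric R) P Q :
  is_dist P -> is_dist Q ->
  game_obj Psi theta yy M0 P Q = marg_obj Psi theta M0 (phi P) (phi Q) + lin_y Psi theta yy.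
Proof.
move=> Pd Qd; case: (Pd) => P0 P1; case: (Qd) => Q0 Q1.
set w := (fun i => (Psi^T *m theta) i 0).
have s X : X = \sum_(yh : lab n) P yh * X by rewrite -mulr_suml P1 mul1r.
have step1 : game_obj Psi theta yy M0 P Q =
   \sum_(yc : lab n) Q yc * \sum_(yh : lab n) P yh * metric_val M0 yh yc
   - \sum_(yc : lab n) Q yc * dotv (yreal R yc) w + dotv (yreal R yy) w.
  rewrite /game_obj exchange_big.
  transitivity (\sum_(yc : lab n) (Q yc * \sum_(yh : lab n) P yh * metric_val M0 yh yc
       - Q yc * dotv (yreal R yc) w + Q yc * dotv (yreal R yy) w)).
    apply: eq_bigr => yc _.
    rewrite (s (Q yc * dotv (yreal R yc) w)) (s (Q yc * dotv (yreal R yy) w)).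
    rewrite mulr_sumr -sumrB -big_split; apply: eq_bigr => yh _ /=.
    rewrite theta_term -/w; ring.
  by rewrite big_split sumrB /= -mulr_suml Q1 mul1r.
rewrite step1 /marg_obj /lin_y rowsum_phi // dotv_suml -/w; congr (_ - _ + _).
rewrite exchange_big /= [in LHS]sum_partPP; apply: eq_bigr => l _.
have ln : (l <= n)%N by rewrite -ltnS.
transitivity (\sum_(yc : lab n | PP yc == l) \sum_(k < n.+1) Q yc *
   \sum_(j < mJ M0) (mg j k l)^-1 *
    (ma j * dotv (pp P k) (yreal R yc)
     + mb j * dotv (fun i => rr P k - pp P k i) (fun i => 1 - yreal R yc i)
     + mf j k l * rr P k)).
  apply: eq_bigr => yc /eqP Pl; rewrite sum_partPP mulr_sumr; apply: eq_bigr => k _.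
  by rewrite core Pl.
rewrite exchange_big; apply: eq_bigr => k _.
have kn : (k <= n)%N by rewrite -ltnS.
rewrite !pcol1_phiF // !pcol0_phiF // !rk_phi //.
under eq_bigr do rewrite mulr_sumr.
rewrite exchange_big; apply: eq_bigr => j _.
rewrite lin3; congr (_ * (_ * _ + _ * _ + _)).
- by rewrite dotvC ppE dotv_suml; apply: eq_bigr => yc _; rewrite dotvC.
- by rewrite dotvC [X in dotv X _]rrppE dotv_suml; apply: eq_bigr => yc _; rewrite dotvC.
Qed.


Definition good (k : nat) (x : 'I_n -> R) (F : lab n -> R) :=
  (forall y, 0 <= F y) /\ (forall y, F y != 0 -> PP y = k) /\
  (forall i, \sum_(y : lab n) F y * yreal R y i = x i).

Definition frac (x : 'I_n -> R) : {set 'I_n} := [set i | (0 < x i) && (x i < 1)].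

Lemma int01 (a : R) : 0 <= a <= 1 -> ~~ ((0 < a) && (a < 1)) -> a = (a == 1)%:R.
Proof.
move=> /andP[a0 a1] hf; case: eqP => [-> //|/eqP an1].
have alt : a < 1 by rewrite lt_neqAle an1 a1.
move: hf; rewrite alt andbT -leNgt /=; lra.
Qed.

Lemma integral_case (k : nat) x : (forall i, 0 <= x i <= 1) -> frac x = finset.set0 ->
  \sum_i x i = k%:R -> exists F, good k x F.
Proof.
move=> h01 hf hs.
have xi i : x i = (x i == 1)%:R.
  apply: int01 => //; apply/negP => hi.
  have : i \in frac x by rewrite inE.
  by rewrite hf inE.
set z : lab n := [ffun i => x i == 1].
have zr i : yreal R z i = x i by rewrite /yreal ffunE -xi.
exists (fun y => (y == z)%:R); split; [|split].
- by move=> y; rewrite ler0n.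
- move=> y /=; case: (eqVneq y z) => [-> _|]; last by rewrite eqxx.
  apply/eqP; rewrite -(eqr_nat R) PPE -hs; apply/eqP; apply: eq_bigr => i _.
  exact: zr.
- move=> i /=; rewrite (bigD1 z) //= eqxx mul1r big1 ?addr0 ?zr //.
  by move=> y /negbTE ->; rewrite mul0r.
Qed.

Lemma no_frac_nat (k c : nat) (a : R) : a = k%:R - c%:R -> 0 < a -> a < 1 -> False.
Proof.
move=> -> h1 h2; case: (leqP c k) => ck.
  move: h1 h2; rewrite -natrB //; case: (k - c)%N => [|d]; first by rewrite ltxx.
  by rewrite -addn1 natrD; have := ler0n R d; lra.
by move: h1; have := (ltr_nat R k c); rewrite ck => /idP; lra.
Qed.

Lemma second_frac (k : nat) x i : (forall i, 0 <= x i <= 1) -> \sum_i x i = k%:R ->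
  i \in frac x -> exists j, (j != i) && (j \in frac x).
Proof.
move=> h01 hs hi; case: (boolP [exists j, (j != i) && (j \in frac x)]).
  by move/existsP.
rewrite negb_exists => /forallP hno; exfalso.
have xj j : j != i -> x j = (x j == 1)%:R.
  move=> ji; apply: int01 => //; apply/negP => hj.
  by have := hno j; rewrite ji inE hj.
move: hi; rewrite inE => /andP[h1 h2].
have : x i = k%:R - (\sum_(j | j != i) ((x j == 1%R) : nat))%:R.
  rewrite natr_sum -hs (bigD1 i) //=.
  have -> : \sum_(j | j != i) ((x j == 1%R) : nat)%:R = \sum_(j | j != i) x j :> R.
    by apply: eq_bigr => j ji; rewrite -xj.
  by rewrite addrK.
by move=> /no_frac_nat; apply.
Qed.

Lemma sum_delta (i : 'I_n) : \sum_(l < n) ((l == i)%:R : R) = 1.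
Proof.
rewrite (bigD1 i) //= eqxx big1 ?addr0 // => l /negbTE ->; by [].
Qed.

Lemma hyper (k N : nat) : forall x, (#|frac x| <= N)%N -> (forall i, 0 <= x i <= 1) ->
  \sum_i x i = k%:R -> exists F, good k x F.
Proof.
elim: N => [|N IH] x hN h01 hs.
  apply: integral_case => //; apply/eqP; rewrite -cards_eq0.
  by move: hN; rewrite leqn0.
case: (set_0Vmem (frac x)) => [hf|[i hi]]; first exact: integral_case.
have [j /andP[ji hj]] := second_frac k x i h01 hs hi.
move: (hi) (hj); rewrite !inE => /andP[xi0 xi1] /andP[xj0 xj1].
set dp := if 1 - x i <= x j then 1 - x i else x j.
set dm := if x i <= 1 - x j then x i else 1 - x j.
have dp0 : 0 < dp by rewrite /dp; case: ifP; lra.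
have dm0 : 0 < dm by rewrite /dm; case: ifP; lra.
have dpi : dp <= 1 - x i by rewrite /dp; case: ifP => h; lra.
have dpj : dp <= x j by rewrite /dp; case: ifP => h; lra.
have dmi : dm <= x i by rewrite /dm; case: ifP => h; lra.
have dmj : dm <= 1 - x j by rewrite /dm; case: ifP => h; lra.
set e := fun l : 'I_n => ((l == i)%:R - (l == j)%:R : R).
have ei : e i = 1 by rewrite /e eqxx eq_sym (negbTE ji) subr0.
have ej : e j = -1 by rewrite /e eqxx (negbTE ji) sub0r.
have eo l : l != i -> l != j -> e l = 0.
  by move=> /negbTE li /negbTE lj; rewrite /e li lj subrr.
have se : \sum_l e l = 0 by rewrite /e sumrB !sum_delta subrr.
set xp := fun l => x l + dp * e l.
set xm := fun l => x l - dm * e l.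
have spx : \sum_l xp l = k%:R by rewrite /xp big_split /= -mulr_sumr se mulr0 addr0.
have smx : \sum_l xm l = k%:R by rewrite /xm sumrB -mulr_sumr se mulr0 subr0.
have h01p : forall l, 0 <= xp l <= 1.
  move=> l; rewrite /xp; case: (eqVneq l i) => [->|li]; first by rewrite ei; lra.
  case: (eqVneq l j) => [->|lj]; first by rewrite ej; lra.
  by rewrite eo // mulr0 addr0.
have h01m : forall l, 0 <= xm l <= 1.
  move=> l; rewrite /xm; case: (eqVneq l i) => [->|li]; first by rewrite ei; lra.
  case: (eqVneq l j) => [->|lj]; first by rewrite ej; lra.
  by rewrite eo // mulr0 subr0.
have subp : frac xp \subset frac x.
  apply/fintype.subsetP => l; case: (eqVneq l i) => [-> //|li].
  case: (eqVneq l j) => [-> //|lj].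
  by rewrite !inE /xp eo // mulr0 addr0.
have subm : frac xm \subset frac x.
  apply/fintype.subsetP => l; case: (eqVneq l i) => [-> //|li].
  case: (eqVneq l j) => [-> //|lj].
  by rewrite !inE /xm eo // mulr0 subr0.
have cp : (#|frac xp| <= N)%N.
  rewrite -ltnS; apply: leq_trans hN; apply: proper_card; apply/properP.
  split => //; case: (boolP (1 - x i <= x j)) => hc.
    have dpe : dp = 1 - x i by rewrite /dp hc.
    by exists i => //; rewrite inE /xp ei mulr1 dpe; apply/negP => /andP[_]; lra.
  have dpe : dp = x j by rewrite /dp (negbTE hc).
  by exists j => //; rewrite inE /xp ej dpe; apply/negP => /andP[]; lra.
have cm : (#|frac xm| <= N)%N.
  rewrite -ltnS; apply: leq_trans hN; apply: proper_card; apply/properP.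
  split => //; case: (boolP (x i <= 1 - x j)) => hc.
    have dme : dm = x i by rewrite /dm hc.
    by exists i => //; rewrite inE /xm ei mulr1 dme; apply/negP => /andP[]; lra.
  have dme : dm = 1 - x j by rewrite /dm (negbTE hc).
  by exists j => //; rewrite inE /xm ej dme; apply/negP => /andP[_]; lra.
have [Fp [Fp0 [Fps Fpm]]] := IH xp cp h01p spx.
have [Fm [Fm0 [Fms Fmm]]] := IH xm cm h01m smx.
set lam := dm / (dp + dm).
have dpm : dp + dm != 0 by apply/eqP; lra.
have lam0 : 0 <= lam by rewrite /lam divr_ge0 //; lra.
have lam1 : lam <= 1 by rewrite /lam ler_pdivrMr; lra.
exists (fun y => lam * Fp y + (1 - lam) * Fm y); split; [|split].
- move=> y; apply: addr_ge0; apply: mulr_ge0 => //; lra.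
- move=> y; case: (eqVneq (Fp y) 0) => [e1|/Fps //].
  case: (eqVneq (Fm y) 0) => [e2|/Fms //].
  by rewrite e1 e2 !mulr0 addr0 eqxx.
- move=> l; under eq_bigr do rewrite mulrDl -!mulrA.
  rewrite big_split /= -!mulr_sumr Fpm Fmm /xp /xm /lam.
  by field.
Qed.


Lemma col_dist (k : nat) (p : 'I_n -> R) : (0 < k)%N -> (forall i, 0 <= p i) ->
  (forall i, p i <= (k%:R)^-1 * \sum_j p j) -> exists E, good k p E.
Proof.
move=> k0 p0 pl.
have S0 : 0 <= \sum_j p j by apply: sumr_ge0.
have kR : 0 < k%:R :> R by rewrite ltr0n.
case: (eqVneq (\sum_j p j) 0) => [Se|Sn].
  exists (fun _ => 0); split; [|split] => //.
  - by move=> y; rewrite eqxx.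
  - move=> i; rewrite big1 => [|y _]; last by rewrite mul0r.
    by rewrite (psumr_eq0P _ Se).
have Sp : 0 < \sum_j p j by rewrite lt_def Sn S0.
set r := (k%:R)^-1 * \sum_j p j.
have r0 : 0 < r by rewrite /r mulr_gt0 // invr_gt0.
set x := fun i => p i / r.
have h01 : forall i, 0 <= x i <= 1.
  move=> i; rewrite /x /=; apply/andP; split; first by rewrite divr_ge0 ?p0 ?ltW.
  rewrite ler_pdivrMr // mul1r; exact: pl.
have hs : \sum_i x i = k%:R.
  rewrite /x -mulr_suml /r invfM invrK mulrCA mulfV ?mulr1 //.
have [F [F0 [Fs Fm]]] := hyper k #|frac x| x (leqnn _) h01 hs.
exists (fun y => r * F y); split; [|split].
- by move=> y; rewrite mulr_ge0 // ltW.
- move=> y; case: (eqVneq (F y) 0) => [->|/Fs //]; by rewrite mulr0 eqxx.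
- move=> i; under eq_bigr do rewrite -mulrA.
  by rewrite -mulr_sumr Fm /x mulrC divfK // gt_eqF.
Qed.

Lemma good_sum (k : nat) p E : good k p E ->
  \sum_i p i = k%:R * \sum_(y : lab n) E y.
Proof.
move=> [E0 [Es Em]].
under eq_bigr do rewrite -Em.
rewrite exchange_big mulr_sumr; apply: eq_bigr => y _.
rewrite -mulr_sumr -PPE; case: (eqVneq (E y) 0) => [->|/Es ->]; last by rewrite mulrC.
by rewrite !mul0r mulr0.
Qed.

Lemma surj M : inDelta M -> exists D, is_dist D /\ phi D = M.
Proof.
move=> [M0 [Mle Msum]].
have hc : forall c : 'I_n, exists E, good c.+1 (fun i => M i c) E.
  by move=> c; apply: col_dist.
have [Ef Efg] := boolp.choice hc.
set z : lab n := [ffun => false].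
have Pz : PP z = 0%N by rewrite /PP big1 // => i _; rewrite ffunE.
set r0 := 1 - \sum_(c < n) (c.+1%:R)^-1 * \sum_(i < n) M i c.
have r00 : 0 <= r0 by rewrite /r0 subr_ge0.
have Ez (c : 'I_n) (y : lab n) : PP y != c.+1 -> Ef c y = 0.
  move=> h; case: (eqVneq (Ef c y) 0) => // /(proj1 (proj2 (Efg c))) e.
  by rewrite e eqxx in h.
exists (fun y => \sum_(c < n) Ef c y + (y == z)%:R * r0); split; [split|].
- move=> y; apply: addr_ge0; last by rewrite mulr_ge0 // ler0n.
  by apply: sumr_ge0 => c _; case: (Efg c).
- rewrite big_split /= exchange_big /=.
  have -> : \sum_(y : lab n) (y == z)%:R * r0 = r0.
    rewrite (bigD1 z) //= eqxx mul1r big1 ?addr0 // => y /negbTE ->.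
    by rewrite mul0r.
  have -> : \sum_(c < n) \sum_(y : lab n) Ef c y =
      \sum_(c < n) (c.+1%:R)^-1 * \sum_(i < n) M i c.
    apply: eq_bigr => c _.
    by rewrite (good_sum _ _ _ (Efg c)) mulKf // pnatr_eq0.
  by rewrite /r0 addrC subrK.
- apply/matrixP => i c; rewrite phiE /pp.
  case: (Efg c) => _ [_ Em]; rewrite -Em big_mkcond /=; apply: eq_bigr => y _.
  case: ifP => [/eqP Py|/negbT Py]; last by rewrite Ez ?Py // mul0r.
  have -> : (y == z) = false by apply/negbTE; apply/eqP => yz; rewrite yz Pz in Py.
  rewrite mul0r addr0 (bigD1 c) //= big1 ?addr0 // => c' c'c.
  by apply: Ez; rewrite Py eqSS; apply/eqP => /val_inj e; rewrite e eqxx in c'c.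
Qed.

End Fin.

Local Open Scope classical_set_scope.

Theorem theorem5 (R : realType) (n m t : nat) (y : lab n) (Psi : 'M[R]_(m, n))
    (tau : 'I_t -> R) (M0 : fmetric R) (Mc : 'I_t -> fmetric R) :
  (0 < n)%N -> (0 < m)%N -> (0 < t)%N ->
  g_nonzero n M0 -> (forall i, g_nonzero n (Mc i)) ->
  ereal_sup [set ereal_inf [set ereal_sup
      [set (game_obj Psi theta y M0 P Q)%:E
       | P in [set P | is_dist P /\ forall i, tau i <= exp_metric (Mc i) P y]]
     | Q in [set Q | is_dist Q]]
   | theta in [set: 'cV[R]_m]]
  =
  ereal_sup [set (ereal_inf [set ereal_sup
      [set (marg_obj Psi theta M0 P Q)%:E
       | P in [set P | inDelta P /\ inGamma Mc tau y P]]
     | Q in [set Q | inDelta Q]] + (lin_y Psi theta y)%:E)%E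
   | theta in [set: 'cV[R]_m]].
Proof.
move=> _ _ _ _ _.
congr ereal_sup; apply: eq_imagel => theta _.
have L1 : forall Q, is_dist Q ->
  [set (game_obj Psi theta y M0 P Q)%:E
       | P in [set P | is_dist P /\ forall i, tau i <= exp_metric (Mc i) P y]] =
  [set (x + (lin_y Psi theta y)%:E)%E | x in [set (marg_obj Psi theta M0 P (phi Q))%:E
       | P in [set P | inDelta P /\ inGamma Mc tau y P]]].
  move=> Q Qd; apply/seteqP; split.
  - move=> _ [P [Pd Pc] <-].
    exists (marg_obj Psi theta M0 (phi P) (phi Q))%:E; last by rewrite gameE // EFinD.
    exists (phi P) => //; split; first exact: inDelta_phi.
    by move=> i; have := Pc i; rewrite exp_metricE.
  - move=> _ [_ [Pm [Pmd Pmg] <-] <-].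
    have [P [Pd PE]] := surj _ Pmd.
    exists P; last by rewrite gameE // EFinD PE.
    split => // i; rewrite exp_metricE // PE; exact: Pmg.
rewrite -inf_shift; congr ereal_inf; apply/seteqP; split.
- move=> _ [Q Qd <-].
  exists (ereal_sup [set (marg_obj Psi theta M0 P (phi Q))%:E
       | P in [set P | inDelta P /\ inGamma Mc tau y P]]).
    by exists (phi Q) => //; exact: inDelta_phi.
  by rewrite -sup_shift L1.
- move=> _ [_ [Qm Qmd <-] <-].
  have [Q [Qd QE]] := surj _ Qmd.
  exists Q => //; by rewrite L1 // sup_shift QE.
Qed.
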